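(* Consider a two-asset G3M with weight $w\in(0,1)$ and fee parameter $\gamma\in(0,1)$, reserves $x_t,y_t>0$ and pool price $P_t=\frac{w}{1-w}\frac{y_t}{x_t}$, in which reserves change by continuous trades obeying $w\,\frac{dx}{x}+\gamma(1-w)\frac{dy}{y}=0$ when $dx<0$ (buying $X$ from the pool) and $\gamma w\frac{dx}{x}+(1-w)\frac{dy}{y}=0$ when $dx>0$ (selling $X$ to the pool). Let the reference price $S_t$ be continuous with $\gamma P_0\le S_0\le\gamma^{-1}P_0$, assume no noise traders, a frictionless reference market and continuous instantaneous arbitrage, and write $\ln P_t=\ln P_0+U_t-L_t$ and $Z_t=\ln(S_t/P_t)=\ln S_t-\ln P_0+L_t-U_t\in[\ln\gamma,-\ln\gamma]$, where $L_t,U_t$ are continuous non-decreasing with $L_0=U_0=0$, $L$ increasing only when $Z_t=\ln\gamma$ and $U$ only when $Z_t=-\ln\gamma$. Then: (a) $x_t$ and $y_t$ are predictable processes; (b) $x_t$ increases only when $Z_t=\ln\gamma$ and decreases only when $Z_t=-\ln\gamma$; $y_t$ increases only when $Z_t=-\ln\gamma$ and decreases only when $Z_t=\ln\gamma$; (c) $\ln x_t$ and $\ln y_t$ are continuous and of bounded variation on bounded subintervals of $[0,\infty)$; (d) $$d\ln x_t=\frac{1-w}{1-w+\gamma w}\,dL_t-\frac{\gamma(1-w)}{\gamma(1-w)+w}\,dU_t,\qquad d\ln y_t=\frac{w}{\gamma(1-w)+w}\,dU_t-\frac{\gamma w}{1-w+\gamma w}\,dL_t.$$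
   Context: $L_t$ (resp. $U_t$) is the cumulative decrease (resp. increase) of $\ln P_t$ due to arbitrage sales of $X$ to (resp. purchases of $X$ from) the pool. Time $t$ is a point of increase (decrease) of $x$ if there is $\delta>0$ with $x_{t-\delta_1}<x_{t+\delta_2}$ (resp. $>$) for all $\delta_1,\delta_2\in(0,\delta]$; $x$ ''increases only when $Z_t=a$'' if $Z_t=a$ at every point of increase. *)

(* Defs.v *)
From HB Require Import structures.
From mathcomp Require Import all_boot all_order all_algebra.
From mathcomp Require Import all_classical all_reals all_analysis.
Set Implicit Arguments. Unset Strict Implicit. Unset Printing Implicit Defensive.
Import Order.TTheory GRing.Theory Num.Theory.
Import numFieldNormedType.Exports.
Local Open Scope classical_set_scope.
Local Open Scope ring_scope.

Section G3M.
Context {R : realType}.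

Definition poolP (w x y : R) : R := w / (1 - w) * (y / x).

Definition point_of_increase (f : R -> R) (t : R) : Prop :=
  exists2 d : R, 0 < d & forall d1 d2 : R, 0 < d1 <= d -> 0 < d2 <= d ->
    f (t - d1) < f (t + d2).
Definition point_of_decrease (f : R -> R) (t : R) : Prop :=
  exists2 d : R, 0 < d & forall d1 d2 : R, 0 < d1 <= d -> 0 < d2 <= d ->
    f (t - d1) > f (t + d2).

Definition increases_only_when (f Z : R -> R) (a : R) : Prop :=
  forall t, 0 < t -> point_of_increase f t -> Z t = a.
Definition decreases_only_when (f Z : R -> R) (a : R) : Prop :=
  forall t, 0 < t -> point_of_decrease f t -> Z t = a.

Definition cont_nondecr0 (f : R -> R) : Prop :=
  [/\ {within `[0, +oo[, continuous f},
      (forall s t, 0 <= s -> s <= t -> f s <= f t) & f 0 = 0].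

Context {d : measure_display} {Omega : measurableType d}.

(** A filtration indexed by time R (only t >= 0 matters). *)
Definition filtration (F : R -> set (set Omega)) : Prop :=
  [/\ forall t, sigma_algebra setT (F t),
      forall t, F t `<=` measurable
    & forall s t, s <= t -> F s `<=` F t].

Definition adapted (F : R -> set (set Omega)) (X : R -> Omega -> R) : Prop :=
  forall t, 0 <= t -> forall B : set R, measurable B -> F t (X t @^-1` B).

Definition predictable_rects (F : R -> set (set Omega)) : set (set (R * Omega)) :=
  [set E | exists A, F 0 A /\ E = [set 0] `*` A] `|`
  [set E | exists s t A, [/\ 0 <= s, s < t, F s A & E = `]s, t] `*` A]].

Definition time_domain : set (R * Omega) := [set p | 0 <= p.1].

Definition predictable (F : R -> set (set Omega)) (X : R -> Omega -> R) : Prop :=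
  forall B : set R, measurable B ->
    <<s time_domain, predictable_rects F >>
      (time_domain `&` [set p | B (X p.1 p.2)]).

End G3M.

(* Main.v *)
Require Import Defs.
From HB Require Import structures.
From mathcomp Require Import all_boot all_order all_algebra.
From mathcomp Require Import all_classical all_reals all_analysis.
From mathcomp Require Import ring lra measurable_realfun.
Import Order.TTheory GRing.Theory Num.Theory.
Import numFieldNormedType.Exports.
Local Open Scope classical_set_scope.
Local Open Scope ring_scope.

Section H.
Context {R : realType}.

Lemma cont_eps (f : R -> R) (t e : R) :
  {within `[0, +oo[, continuous f} -> 0 <= t -> 0 < e ->
  exists2 del : R, 0 < del & forall s, 0 <= s -> `|s - t| < del -> `|f s - f t| < e.
Proof.
move=> cf t0 e0.
move/subspace_continuousP : cf => /(_ t).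
rewrite /= in_itv /= andbT => /(_ t0).
move=> /cvgrPdist_lt /(_ e e0).
rewrite near_withinE /= => /nbhs_ballP [del del0 H].
exists del => // s s0 st.
have := H s. rewrite /ball /= distrC st => /(_ isT).
rewrite /= in_itv /= andbT s0 distrC => /(_ isT) //.
Qed.

Definition locconst (f : R -> R) (t : R) :=
  exists2 e : R, 0 < e & forall r, `|r - t| < e -> f r = f t.

Lemma not_poi_locconst (f : R -> R) (t : R) :
  (forall s u, 0 <= s -> s <= u -> f s <= f u) -> 0 < t ->
  ~ point_of_increase f t -> locconst f t.
Proof.
move=> fnd t0 NP.
have [[d1 [d2 [h1 [h2 h3]]]]|H] := pselect (exists d1 d2,
   (0 < d1 <= t/2) /\ (0 < d2 <= t/2) /\ f (t + d2) <= f (t - d1)); last first.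
  exfalso; apply: NP; exists (t/2); first by rewrite divr_gt0.
  move=> d1 d2 h1 h2; rewrite ltNge; apply/negP => hle; apply: H.
  by exists d1, d2.
case/andP: h1 => d10 d1t; case/andP: h2 => d20 d2t.
have tpos : 0 <= t - d1.
  lra.
exists (Num.min d1 d2); first by rewrite lt_min d10 d20.
move=> r; rewrite lt_min => /andP[r1 r2].
have hr1 : t - d1 <= r by move: r1; rewrite ltr_norml => /andP[+ _]; rewrite ltrBrDl => ?; lra.
have hr2 : r <= t + d2 by move: r2; rewrite ltr_norml => /andP[_ +] => ?; lra.
have a1 := fnd _ _ tpos hr1.
have a2 := fnd _ _ (le_trans tpos hr1) hr2.
have a3 : f (t - d1) <= f t by apply: fnd => //; lra.
have a4 : f t <= f (t + d2) by apply: fnd; lra.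
apply/eqP; rewrite eq_le; apply/andP; split; lra.
Qed.

Lemma locconst_const (f : R -> R) (p q : R) : p <= q ->
  {within `[p, q], continuous f} ->
  (forall r, p < r < q -> locconst f r) -> f q = f p.
Proof.
rewrite le_eqVlt => /orP[/eqP -> //|pq] cf lc.
have [|c _ ] := @MVT R f (fun _ => 0) p q pq _ cf; last first.
  by rewrite mul0r => /eqP; rewrite subr_eq0 => /eqP.
move=> r; rewrite in_itv /= => /lc [e e0 H].
apply: (@near_eq_is_derive _ _ _ (cst (f r)) f r 1 0).
near=> y; rewrite /cst H //.
Unshelve. all: by end_near.
Qed.

Lemma flat (f Z : R -> R) c t : cont_nondecr0 f -> increases_only_when f Z c ->
  0 < t -> Z t <> c -> locconst f t.
Proof.
move=> [_ fnd _] inc t0 Zc; apply: not_poi_locconst => // H.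
by apply: Zc; apply: inc.
Qed.

Lemma last_inc (f Z : R -> R) c t : cont_nondecr0 f -> increases_only_when f Z c ->
  0 <= t -> 0 < f t -> exists s, [/\ 0 < s, s <= t, Z s = c & f s = f t].
Proof.
move=> fc inc t0 ft0; have [cf fnd f00] := fc.
pose E := [set r | 0 <= r /\ f t <= f r].
have Et : E t by split.
have lbE : has_lbound E by exists 0 => r [].
have neE : E !=set0 by exists t.
set s := inf E.
have s0 : 0 <= s by apply: lb_le_inf => // r [].
have st : s <= t by apply: ge_inf.
have fst : f s = f t.
  apply/eqP; rewrite eq_le fnd //=; rewrite leNgt; apply/negP => fl.
  have Hfe : 0 < f t - f s by rewrite subr_gt0.
  have [del del0 H] := cont_eps _ _ _ cf s0 Hfe.
  have [|r Er rlt] := @inf_adherent _ E del del0; first by split.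
  have sr : s <= r by apply: ge_inf.
  have hrs : `|r - s| < del by rewrite ger0_norm ?subr_ge0 //; lra.
  have := H r (le_trans s0 sr) hrs; rewrite ltr_norml => /andP[_]; case: Er => _; lra.
have spos : 0 < s.
  rewrite lt_def s0 andbT; apply/eqP => s0'.
  by move: fst ft0; rewrite s0' f00 => <-; rewrite ltxx.
exists s; split => //.
apply: contrapT => Zs.
have [e e0 H] := flat _ _ _ _ fc inc spos Zs.
pose r := s - Num.min e s / 2.
have me : 0 < Num.min e s by rewrite lt_min e0 spos.
have hr : `|r - s| < e.
  rewrite /r addrAC subrr add0r normrN gtr0_norm ?divr_gt0 //.
  have : Num.min e s <= e by rewrite ge_min lexx.
  lra.
have Er : E r.
  split; last by rewrite (H r hr) fst.
  have : Num.min e s <= s by rewrite ge_min lexx orbT.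
  rewrite /r; lra.
have := ge_inf lbE Er; rewrite -/s /r; lra.
Qed.

Lemma step_bad (z Z L U l u : R -> R) a t :
  cont_nondecr0 L -> increases_only_when L Z a ->
  (forall t, 0 <= t -> Z t = z t + L t - U t) ->
  (forall s t, 0 <= s -> s <= t -> a - z s + u s <= l t) ->
  (forall t, 0 <= t -> 0 <= l t) ->
  0 <= t -> l t < L t -> exists s, [/\ 0 < s, s <= t, Z s = a & u s < U s].
Proof.
move=> Lc inc ZE lu l0 t0 lt.
have Lt0 : 0 < L t by apply: le_lt_trans lt; exact: l0.
have [s [s0 st Zs Ls]] := last_inc _ _ _ _ Lc inc t0 Lt0.
exists s; split => //.
have := ZE s (ltW s0); rewrite Zs => h.
have := lu s t (ltW s0) st.
lra.
Qed.

Lemma skoro_min (z Z L U l u : R -> R) (a b : R) :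
  a < b ->
  cont_nondecr0 L -> cont_nondecr0 U ->
  increases_only_when L Z a -> increases_only_when U Z b ->
  {within `[0, +oo[, continuous Z} ->
  (forall t, 0 <= t -> Z t = z t + L t - U t) ->
  (forall t, 0 <= t -> (0 <= l t /\ l t <= L t) /\ (0 <= u t /\ u t <= U t)) ->
  (forall s t, 0 <= s -> s <= t -> a - z s + u s <= l t) ->
  (forall s t, 0 <= s -> s <= t -> z s + l s - b <= u t) ->
  forall t, 0 <= t -> l t = L t /\ u t = U t.
Proof.
move=> ab Lc Uc incL incU cZ ZE bnd luL luU.
have l0 t : 0 <= t -> 0 <= l t by move=> /bnd [[]].
have u0 t : 0 <= t -> 0 <= u t by move=> /bnd [_ []].
have stepL := step_bad _ _ _ _ _ _ _ _ Lc incL ZE luL l0.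
have ZE' t : 0 <= t -> - Z t = - z t + U t - L t.
  by move=> /ZE ->; rewrite !opprD opprK addrC; lra.
have incU' : increases_only_when U (fun t => - Z t) (- b).
  by move=> t t0 /(incU t t0) ->.
have luU' s t : 0 <= s -> s <= t -> - b - - z s + l s <= u t.
  by move=> s0 st; have := luU s t s0 st; lra.
have stepU0 := step_bad _ _ _ _ _ _ _ _ Uc incU' ZE' luU' u0.
have stepU t : 0 <= t -> u t < U t -> exists s, [/\ 0 < s, s <= t, Z s = b & l s < L s].
  move=> t0 ut; have [s [s0 st Zs ls]] := stepU0 t t0 ut.
  by exists s; split => //; rewrite -[Z s]opprK Zs opprK.
pose Bd := [set t | 0 <= t /\ (l t < L t \/ u t < U t)].
move=> t t0; apply: contrapT => Hneq.
have Bt : Bd t.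
  split => //; have [[_ hl] [_ hu]] := bnd t t0.
  move: hl hu; rewrite !le_eqVlt => /orP[/eqP hl|hl] /orP[/eqP hu|hu]; try by [left|right].
  by exfalso; apply: Hneq.
have lbB : has_lbound Bd by exists 0 => r [].
have neB : Bd !=set0 by exists t.
set ts := inf Bd.
have ts0 : 0 <= ts by apply: lb_le_inf => // r [].
have ba2 : 0 < (b - a) / 2 by rewrite divr_gt0 // subr_gt0.
have [del del0 H] := cont_eps _ _ _ cZ ts0 ba2.
have [|r [r0 Br] rlt] := @inf_adherent _ Bd del del0; first by split.
have tsr : ts <= r by apply: ge_inf.
suff [s [s' [h1 h2 h3 h4 [h5 h6]]]] : exists s s',
   [/\ ts <= s, s <= r, ts <= s', s' <= r & (Z s = a /\ Z s' = b)].
  have hs : `|s - ts| < del by rewrite ger0_norm ?subr_ge0 //; lra.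
  have hs' : `|s' - ts| < del by rewrite ger0_norm ?subr_ge0 //; lra.
  have := H s (le_trans ts0 h1) hs; have := H s' (le_trans ts0 h3) hs'.
  rewrite h5 h6 !ltr_norml; lra.
case: Br => [lr|ur].
- have [s [s0 sr Zs us]] := stepL r r0 lr.
  have tss : ts <= s by apply: ge_inf => //; split; [exact: ltW|right].
  have [s' [s'0 s's Zs' ls']] := stepU s (ltW s0) us.
  have tss' : ts <= s' by apply: ge_inf => //; split; [exact: ltW|left].
  exists s, s'; split => //; exact: le_trans s's sr.
- have [s [s0 sr Zs ls]] := stepU r r0 ur.
  have tss : ts <= s by apply: ge_inf => //; split; [exact: ltW|left].
  have [s' [s'0 s's Zs' us']] := stepL s (ltW s0) ls.
  have tss' : ts <= s' by apply: ge_inf => //; split; [exact: ltW|right].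
  exists s', s; split => //; exact: le_trans s's sr.
Qed.

Lemma wcontD (A : set R) (f g : R -> R) : {within A, continuous f} -> {within A, continuous g} ->
  {within A, continuous (fun x => f x + g x)}.
Proof. by move=> cf cg x; apply: continuousD; [exact: cf|exact: cg]. Qed.
Lemma wcontN (A : set R) (f : R -> R) : {within A, continuous f} ->
  {within A, continuous (fun x => - f x)}.
Proof. by move=> cf x; apply: continuousN; exact: cf. Qed.
Lemma wcontM (A : set R) c (f : R -> R) : {within A, continuous f} ->
  {within A, continuous (fun x => c * f x)}.
Proof. by move=> cf x; apply: continuousM; [exact: cst_continuous|exact: cf]. Qed.
Lemma wcontC (A : set R) (c : R) : {within A, continuous (fun _ : R => c)}.
Proof. by move=> x; exact: cst_continuous. Qed.

Lemma wcont_eq (A : set R) (f g : R -> R) : (forall x, A x -> f x = g x) ->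
  {within A, continuous f} -> {within A, continuous g}.
Proof. by move=> fg; apply: subspace_eq_continuous => x; rewrite inE => /fg. Qed.

Lemma wcont_comp (A : set R) (f h : R -> R) : (forall x, A x -> {for f x, continuous h}) ->
  {within A, continuous f} -> {within A, continuous (fun x => h (f x))}.
Proof.
move=> ch cf; apply/subspace_continuousP => x Ax.
have := (subspace_continuousP _ _).1 cf x Ax.
move=> fx; apply: (continuous_cvg _ (ch x Ax) fx).
Qed.

Lemma uniq_dec (Z L U A B : R -> R) a b cA cB : a != b ->
  cont_nondecr0 L -> cont_nondecr0 U -> cont_nondecr0 A -> cont_nondecr0 B ->
  increases_only_when L Z a -> increases_only_when A Z a ->
  increases_only_when U Z b -> increases_only_when B Z b ->
  (forall t, 0 <= t -> U t - L t = cB * B t - cA * A t) ->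
  forall t, 0 <= t -> L t = cA * A t /\ U t = cB * B t.
Proof.
move=> ab Lc Uc Ac Bc iL iA iU iB E.
pose D t := L t - cA * A t.
have DE t : 0 <= t -> D t = U t - cB * B t by move=> /E; rewrite /D; lra.
have cD : {within `[0, +oo[, continuous D}.
  apply: wcontD; first by case: Lc.
  by apply: wcontN; apply: wcontM; case: Ac.
have D0 : D 0 = 0 by rewrite /D; case: Lc => _ _ ->; case: Ac => _ _ ->; rewrite mulr0 subr0.
have lcD t : 0 < t -> locconst D t.
  move=> t0; have [Za|Za] := eqVneq (Z t) a.
  - have Zb : Z t <> b by move=> Zb; move: ab; rewrite -Za Zb eqxx.
    have [e1 e10 H1] := flat _ _ _ _ Uc iU t0 Zb.
    have [e2 e20 H2] := flat _ _ _ _ Bc iB t0 Zb.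
    exists (Num.min t (Num.min e1 e2)); first by rewrite !lt_min t0 e10 e20.
    move=> r; rewrite !lt_min => /andP[rt /andP[r1 r2]].
    have r0 : 0 <= r by move: rt; rewrite ltr_norml; lra.
    by rewrite !DE ?(ltW t0) // H1 // H2.
  - have Za' : Z t <> a by apply/eqP.
    have [e1 e10 H1] := flat _ _ _ _ Lc iL t0 Za'.
    have [e2 e20 H2] := flat _ _ _ _ Ac iA t0 Za'.
    exists (Num.min e1 e2); first by rewrite !lt_min e10 e20.
    move=> r; rewrite !lt_min => /andP[r1 r2].
    by rewrite /D H1 // H2.
move=> t t0.
have : D t = D 0.
  apply: locconst_const => //.
    by apply: continuous_subspaceW cD => r /=; rewrite !in_itv /= => /andP[-> _].
  by move=> r /andP[r0 _]; apply: lcD.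
rewrite D0 => Dt; split; first by move: Dt; rewrite /D; lra.
by move: Dt; rewrite DE //; lra.
Qed.

Definition cq (t : R) (n : nat) : R :=
  if n is n'.+1 then
    (if @unpickle rat n' is Some q then
       (if (0 <= (ratr q : R)) && (ratr q <= t) then ratr q else t) else t)
  else t.

Lemma cq_bnd t n : 0 <= t -> 0 <= cq t n <= t.
Proof.
move=> t0; case: n => [|n] /=; first by rewrite t0 lexx.
case: (unpickle n) => [q|]; last by rewrite t0 lexx.
by case: ifP => // _; rewrite t0 lexx.
Qed.

Lemma cq_rat t (q : rat) : 0 <= (ratr q : R) <= t -> cq t (pickle q).+1 = ratr q.
Proof. by move=> h; rewrite /= pickleK h. Qed.

Definition Lop (G : R -> R) (t : R) : R :=
  sup (range (fun n => Num.max 0 (G (cq t n)))).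

Definition Lub (G : R -> R) (t : R) := has_ubound (range (fun n => Num.max 0 (G (cq t n)))).

Lemma Lop_ub G t M : 0 <= t -> 0 <= M -> (forall c, 0 <= c -> c <= t -> G c <= M) ->
  Lub G t /\ Lop G t <= M.
Proof.
move=> t0 M0 GM.
have ub : ubound (range (fun n => Num.max 0 (G (cq t n)))) M.
  move=> _ [n _ <-]; rewrite ge_max M0 /=.
  by have /andP[h1 h2] := cq_bnd _ n t0; apply: GM.
split; first by exists M.
by apply: ge_sup => //; exists (Num.max 0 (G (cq t 0))); exists 0%N.
Qed.

Lemma Lop_ge G t n : Lub G t -> Num.max 0 (G (cq t n)) <= Lop G t.
Proof. by move=> ub; apply: ub_le_sup => //; exists n. Qed.

Lemma Lop_ge0 G t : Lub G t -> 0 <= Lop G t.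
Proof. by move=> ub; apply: le_trans (Lop_ge _ _ 0 ub); rewrite le_max lexx. Qed.

Definition rlsc (G : R -> R) (s : R) :=
  forall e, 0 < e -> exists2 del, 0 < del & forall c, s < c -> c < s + del -> G s - e <= G c.

Lemma Lop_dens G s t : 0 <= s -> s <= t -> Lub G t -> rlsc G s ->
  Num.max 0 (G s) <= Lop G t.
Proof.
move=> s0 st ub rl; rewrite ge_max Lop_ge0 //=.
move: st; rewrite le_eqVlt => /orP[/eqP st'|st].
  subst t; by apply: le_trans (Lop_ge _ _ 0 ub); rewrite le_max lexx orbT.
rewrite leNgt; apply/negP => lt.
have e0 : 0 < (G s - Lop G t) / 2 by rewrite divr_gt0 // subr_gt0.
have [del del0 H] := rl _ e0.
have : s < Num.min t (s + del) by rewrite lt_min st ltrDl del0.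
move=> /rat_in_itvoo [q]; rewrite in_itv /= lt_min => /andP[sq /andP[qt qd]].
have hq : 0 <= (ratr q : R) <= t.
  by apply/andP; split; [exact: le_trans s0 (ltW sq)|exact: ltW].
have := Lop_ge _ _ (pickle q).+1 ub; rewrite cq_rat // ge_max => /andP[_].
have := H _ sq qd.
lra.
Qed.

Lemma Lop_mono G s t : 0 <= s -> s <= t -> Lub G s -> Lub G t ->
  (forall c, 0 <= c -> c <= t -> rlsc G c) -> Lop G s <= Lop G t.
Proof.
move=> s0 st ubs ubt rl.
apply: ge_sup; first by exists (Num.max 0 (G (cq s 0))); exists 0%N.
move=> _ [n _ <-].
have /andP[c0 cs] := cq_bnd _ n s0.
apply: Lop_dens => //; first exact: le_trans st.
by apply: rl => //; exact: le_trans st.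
Qed.

Lemma rlsc_sum (al v : R -> R) s : 0 <= s ->
  {within `[0, +oo[, continuous al} ->
  (forall x y, 0 <= x -> x <= y -> v x <= v y) ->
  rlsc (fun c => al c + v c) s.
Proof.
move=> s0 cal vnd e e0.
have [del del0 H] := cont_eps _ _ _ cal s0 e0.
exists del => // c sc cd.
have c0 : 0 <= c by apply: le_trans (ltW sc).
have := H c c0; rewrite ger0_norm ?subr_ge0 ?(ltW sc) //.
have := vnd s c s0 (ltW sc).
move=> h1 /(_ _); rewrite ltrBlDl => /(_ cd); rewrite ltr_norml; lra.
Qed.

Lemma op_props (al v M : R -> R) :
  {within `[0, +oo[, continuous al} ->
  (forall x y, 0 <= x -> x <= y -> v x <= v y) ->
  (forall t, 0 <= t -> 0 <= M t) ->
  (forall c t, 0 <= c -> c <= t -> al c + v c <= M t) ->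
  [/\ forall t, 0 <= t -> Lub (fun c => al c + v c) t,
      forall t, 0 <= t -> 0 <= Lop (fun c => al c + v c) t <= M t
    & forall s t, 0 <= s -> s <= t ->
        Lop (fun c => al c + v c) s <= Lop (fun c => al c + v c) t].
Proof.
move=> cal vnd M0 GM.
have ub t : 0 <= t -> Lub (fun c => al c + v c) t /\ Lop (fun c => al c + v c) t <= M t.
  by move=> t0; apply: Lop_ub => //; [exact: M0|move=> c c0 ct; exact: GM].
split.
- by move=> t /ub [].
- by move=> t t0; have [h1 h2] := ub t t0; rewrite Lop_ge0 // h2.
- move=> s t s0 st; apply: Lop_mono => //.
  + by case: (ub s s0).
  + by case: (ub t (le_trans s0 st)).
  + by move=> c c0 _; apply: rlsc_sum.
Qed.

Fixpoint li (z : R -> R) (a b : R) (k : nat) : R -> R :=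
  if k is k'.+1 then Lop (fun s => (a - z s) + Lop (fun c => (z c - b) + li z a b k' c) s)
  else fun _ => 0.
Definition ui z a b k := Lop (fun c => (z c - b) + li z a b k c).
Definition linf z a b t := sup (range (fun k => li z a b k t)).
Definition uinf z a b t := sup (range (fun k => ui z a b k t)).

Lemma liS z a b k : li z a b k.+1 = Lop (fun s => (a - z s) + ui z a b k s).
Proof. by []. Qed.

Section Iter.
Variables (z Z L U : R -> R) (a b : R).
Hypotheses (Lc : cont_nondecr0 L) (Uc : cont_nondecr0 U).
Hypothesis cz : {within `[0, +oo[, continuous z}.
Hypothesis ZE : forall t, 0 <= t -> Z t = z t + L t - U t.
Hypothesis Zab : forall t, 0 <= t -> a <= Z t <= b.

Let L0 t : 0 <= t -> 0 <= L t.
Proof. by case: Lc => _ nd L00 t0; rewrite -L00; apply: nd. Qed.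
Let U0 t : 0 <= t -> 0 <= U t.
Proof. by case: Uc => _ nd U00 t0; rewrite -U00; apply: nd. Qed.

Definition iprop (f M : R -> R) :=
  (forall t, 0 <= t -> 0 <= f t <= M t) /\ (forall s t, 0 <= s -> s <= t -> f s <= f t).

Lemma iter_props k :
  [/\ iprop (li z a b k) L, iprop (ui z a b k) U,
      forall t, 0 <= t -> Lub (fun c => (z c - b) + li z a b k c) t
    & forall t, 0 <= t -> Lub (fun c => (a - z c) + ui z a b k c) t].
Proof.
have [_ Lnd _] := Lc; have [_ Und _] := Uc.
have czb : {within `[0, +oo[, continuous (fun c => z c - b)}.
  by apply: wcontD => //; exact: wcontC.
have caz : {within `[0, +oo[, continuous (fun c => a - z c)}.
  by apply: wcontD; [exact: wcontC|exact: wcontN].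
have stepU (l : R -> R) : iprop l L ->
    iprop (Lop (fun c => (z c - b) + l c)) U /\
    forall t, 0 <= t -> Lub (fun c => (z c - b) + l c) t.
  move=> [lb lm].
  have hb c t : 0 <= c -> c <= t -> (z c - b) + l c <= U t.
    move=> c0 ct; have := ZE c c0; have := Zab c c0; have := lb c c0.
    have := Und c t c0 ct; lra.
  have [h1 h2 h3] := op_props _ _ _ czb lm U0 hb.
  by split => //; split.
have stepL (u : R -> R) : iprop u U ->
    iprop (Lop (fun c => (a - z c) + u c)) L /\
    forall t, 0 <= t -> Lub (fun c => (a - z c) + u c) t.
  move=> [ub um].
  have hb c t : 0 <= c -> c <= t -> (a - z c) + u c <= L t.
    move=> c0 ct; have := ZE c c0; have := Zab c c0; have := ub c c0.
    have := Lnd c t c0 ct; lra.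
  have [h1 h2 h3] := op_props _ _ _ caz um L0 hb.
  by split => //; split.
elim: k => [|k [IHl IHu IHub IHlb]].
- have i0 : iprop (li z a b 0) L by split => [t t0|s t _ _] /=; rewrite ?lexx ?L0.
  have [iu ub] := stepU _ i0.
  have [il lb] := stepL _ iu.
  by split.
- have il : iprop (li z a b k.+1) L by rewrite liS; exact: (stepL _ IHu).1.
  have [iu ub] := stepU _ il.
  have [_ lb] := stepL _ iu.
  by split.
Qed.

Lemma iter_bnd t : 0 <= t ->
  has_ubound (range (fun k => li z a b k t)) /\ has_ubound (range (fun k => ui z a b k t)).
Proof.
move=> t0; split.
- by exists (L t) => _ [k _ <-]; have [[h _] _ _ _] := iter_props k; case/andP: (h t t0).
- by exists (U t) => _ [k _ <-]; have [_ [h _] _ _] := iter_props k; case/andP: (h t t0).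
Qed.

Lemma iter_limit : a < b -> increases_only_when L Z a -> increases_only_when U Z b ->
  {within `[0, +oo[, continuous Z} ->
  forall t, 0 <= t -> linf z a b t = L t /\ uinf z a b t = U t.
Proof.
move=> ab iL iU cZ.
have caz : {within `[0, +oo[, continuous (fun c => a - z c)}.
  by apply: wcontD; [exact: wcontC|exact: wcontN].
have czb : {within `[0, +oo[, continuous (fun c => z c - b)}.
  by apply: wcontD => //; exact: wcontC.
have neL t : range (fun k => li z a b k t) !=set0 by exists (li z a b 0 t); exists 0%N.
have neU t : range (fun k => ui z a b k t) !=set0 by exists (ui z a b 0 t); exists 0%N.
have leL t k : 0 <= t -> li z a b k t <= linf z a b t.
  by move=> t0; apply: (ub_le_sup (iter_bnd t t0).1); exists k.
have leU t k : 0 <= t -> ui z a b k t <= uinf z a b t.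
  by move=> t0; apply: (ub_le_sup (iter_bnd t t0).2); exists k.
apply: (skoro_min _ _ _ _ _ _ _ _ ab Lc Uc iL iU cZ ZE).
- move=> t t0; split; split.
  + by apply: le_trans (leL t 0%N t0); rewrite /= lexx.
  + apply: ge_sup => // _ [k _ <-].
    by have [[h _] _ _ _] := iter_props k; case/andP: (h t t0).
  + apply: le_trans (leU t 0%N t0).
    by have [_ [h _] _ _] := iter_props 0; case/andP: (h t t0).
  + apply: ge_sup => // _ [k _ <-].
    by have [_ [h _] _ _] := iter_props k; case/andP: (h t t0).
- move=> s t s0 st.
  have : uinf z a b s <= linf z a b t - (a - z s).
    apply: ge_sup => // _ [k _ <-].
    have [_ [_ um] _ lub] := iter_props k.
    have h := Lop_dens _ _ _ s0 st (lub t (le_trans s0 st))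
      (rlsc_sum _ _ _ s0 caz um).
    have := leL t k.+1 (le_trans s0 st); rewrite liS.
    move: h; rewrite ge_max => /andP[_ h1] h2; lra.
  lra.
- move=> s t s0 st.
  have : linf z a b s <= uinf z a b t - (z s - b).
    apply: ge_sup => // _ [k _ <-].
    have [[_ lm] _ uub _] := iter_props k.
    have h := Lop_dens _ _ _ s0 st (uub t (le_trans s0 st))
      (rlsc_sum _ _ _ s0 czb lm).
    have := leU t k (le_trans s0 st); rewrite /ui.
    move: h; rewrite ge_max => /andP[_ h1] h2; lra.
  lra.
Qed.
End Iter.
End H.

Section M.
Context {R : realType} {d : measure_display} {Omega : measurableType d}.
Variable F : R -> set (set Omega).
Hypothesis HF : filtration F.

Definition meas t (f : Omega -> R) := forall B : set R, measurable B -> F t (f @^-1` B).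

Lemma meas_mf t f : meas t f <-> measurable_fun setT (f : g_sigma_algebraType (F t) -> R).
Proof.
have [sa _ _] := HF.
have E := measurable_g_measurableTypeE (sa t).
split.
- move=> mf _ B mB; rewrite setTI.
  change (<<s F t >> (f @^-1` B)).
  by rewrite (sigma_algebra_id (sa t)); apply: mf.
- move=> mf B mB; have := mf measurableT B mB; rewrite setTI.
  change (<<s F t >> (f @^-1` B) -> F t (f @^-1` B)).
  by rewrite (sigma_algebra_id (sa t)).
Qed.

Lemma meas_mono s t f : s <= t -> meas s f -> meas t f.
Proof. by case: HF => _ _ mon st mf B mB; apply: mon st _ (mf B mB). Qed.

Lemma meas_cst t c : meas t (fun _ => c).
Proof. by apply/meas_mf; exact: measurable_cst. Qed.

Lemma measD t f g : meas t f -> meas t g -> meas t (fun w => f w + g w).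
Proof. by move=> /meas_mf mf /meas_mf mg; apply/meas_mf; exact: measurable_funD. Qed.

Lemma measN t f : meas t f -> meas t (fun w => - f w).
Proof. by move=> /meas_mf mf; apply/meas_mf; exact: measurableT_comp. Qed.

Lemma measMl t c f : meas t f -> meas t (fun w => c * f w).
Proof. by move=> /meas_mf mf; apply/meas_mf; exact: measurable_funM. Qed.

Lemma meas_ln t f : meas t f -> meas t (fun w => ln (f w)).
Proof. by move=> /meas_mf mf; apply/meas_mf; exact: (measurableT_comp (@measurable_ln R)). Qed.

Lemma meas_exp t f : meas t f -> meas t (fun w => expR (f w)).
Proof. by move=> /meas_mf mf; apply/meas_mf; exact: (measurableT_comp (@measurable_expR R)). Qed.

Lemma meas_max t f g : meas t f -> meas t g -> meas t (fun w => Num.max (f w) (g w)).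
Proof. by move=> /meas_mf mf /meas_mf mg; apply/meas_mf; exact: measurable_maxr. Qed.

Lemma meas_sup t (h : nat -> Omega -> R) :
  (forall w, has_ubound (range (h ^~ w))) -> (forall n, meas t (h n)) ->
  meas t (fun w => sup (range (h ^~ w))).
Proof.
move=> ub mh; apply/meas_mf.
have := @measurable_fun_sups _ (g_sigma_algebraType (F t)) R setT h 0%N.
have -> : (fun x => sups (h ^~ x) 0%N) = (fun w => sup (range (h ^~ w))).
  apply/funext => w; rewrite /sups /=; congr sup.
  by apply/seteqP; split => _ [n _ <-]; exists n.
apply; first by move=> w _; exact: ub.
by move=> n; apply/meas_mf.
Qed.

Lemma meas_ext t f g : (forall w, f w = g w) -> meas t f -> meas t g.
Proof. by move=> fg; have -> : g = f by apply/funext => w; rewrite fg. Qed.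

Lemma meas_Lop t (G : Omega -> R -> R) : 0 <= t -> (forall w, Lub (G w) t) ->
  (forall c, 0 <= c -> c <= t -> meas t (fun w => G w c)) ->
  meas t (fun w => Lop (G w) t).
Proof.
move=> t0 ub mG; rewrite /Lop.
apply: (meas_sup t (fun n w => Num.max 0 (G w (cq t n)))) => [w|n]; first exact: ub.
apply: meas_max; first exact: meas_cst.
by have /andP[h1 h2] := cq_bnd t n t0; apply: mG.
Qed.

Lemma meas_iter (z : Omega -> R -> R) a b :
  (forall s, 0 <= s -> meas s (fun w => z w s)) ->
  (forall w k t, 0 <= t -> Lub (fun c => (z w c - b) + li (z w) a b k c) t /\
                          Lub (fun c => (a - z w c) + ui (z w) a b k c) t) ->
  forall k t, 0 <= t -> meas t (fun w => li (z w) a b k t) /\ meas t (fun w => ui (z w) a b k t).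
Proof.
move=> mz ub; elim=> [|k IH] t t0.
- have m0 : meas t (fun w => li (z w) a b 0 t) by exact: meas_cst.
  split => //; rewrite /ui; apply: meas_Lop => // [w|c c0 ct]; first by case: (ub w 0%N t t0).
  apply: (meas_mono c) => //; apply: measD; last exact: meas_cst.
  by apply: measD; [exact: mz|exact: meas_cst].
- have ml : meas t (fun w => li (z w) a b k.+1 t).
    apply: (meas_ext _ (fun w => Lop (fun s => (a - z w s) + ui (z w) a b k s) t)).
      by move=> w; rewrite liS.
    apply: meas_Lop => // [w|c c0 ct]; first by case: (ub w k t t0).
    apply: (meas_mono c) => //; apply: measD; last exact: (IH c c0).2.
    by apply: measD; [exact: meas_cst|apply: measN; exact: mz].
  split => //; rewrite /ui; apply: meas_Lop => // [w|c c0 ct]; first by case: (ub w k.+1 t t0).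
  apply: (meas_mono c) => //; apply: measD.
    by apply: measD; [exact: mz|exact: meas_cst].
  apply: (meas_ext _ (fun w => Lop (fun s => (a - z w s) + ui (z w) a b k s) c)).
    by move=> w; rewrite liS.
  apply: meas_Lop => // [w|c' c'0 c't]; first by case: (ub w k c c0).
  apply: (meas_mono c') => //; apply: measD; last exact: (IH c' c'0).2.
  by apply: measD; [exact: meas_cst|apply: measN; exact: mz].
Qed.
End M.

Section P.
Context {R : realType} {d : measure_display} {Omega : measurableType d}.

Definition grid (m : nat) (t : R) : R :=
  if 0 < t then ((Num.ceil (t * m.+1%:R) - 1)%:~R) / m.+1%:R else 0.

Lemma grid_pos m t : 0 < t -> exists k : nat,
  grid m t = k%:R / m.+1%:R /\ k%:R / m.+1%:R < t /\ t <= k.+1%:R / m.+1%:R.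
Proof.
move=> t0; set N : R := m.+1%:R.
have N0 : 0 < N by rewrite /N ltr0Sn.
have x0 : 0 < t * N by rewrite mulr_gt0.
have [h1 h2] : ((Num.ceil (t * N) - 1)%:~R < t * N) /\ (t * N <= (Num.ceil (t * N))%:~R).
  by have /andP[] := real_ceil_itv (num_real (t * N)).
have c0 : 0 < Num.ceil (t * N) by rewrite real_ceil_gt_int ?num_real.
set c := Num.ceil (t * N) in h1 h2 c0 *.
have c10 : 0 <= c - 1 by rewrite subr_ge0.
exists `|c - 1|%N.
have kE : (`|c - 1|%N%:R : R) = (c - 1)%:~R by rewrite natr_absz ger0_norm.
have k1E : (`|c - 1|%N.+1%:R : R) = c%:~R by rewrite -natr1 kE intrD addrNK.
rewrite /grid t0 kE k1E; split => //; split.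
  by rewrite ltr_pdivrMr.
by rewrite ler_pdivlMr.
Qed.

Lemma grid_uniq m t (k : nat) : k%:R / m.+1%:R < t -> t <= k.+1%:R / m.+1%:R ->
  grid m t = k%:R / m.+1%:R.
Proof.
set N : R := m.+1%:R => h1 h2.
have N0 : 0 < N by rewrite /N ltr0Sn.
have t0 : 0 < t by apply: le_lt_trans h1; rewrite divr_ge0.
have e1 : (k.+1%:Z - 1) = k%:Z by rewrite -addn1 PoszD addrK.
have cE : Num.ceil (t * N) = k.+1%:Z.
  apply: ceil_def; rewrite e1 -!pmulrn.
  rewrite -ltr_pdivrMr // -ler_pdivlMr //.
  by rewrite h1 h2.
by rewrite /grid t0 cE e1 -pmulrn.
Qed.

Variable F : R -> set (set Omega).
Hypothesis HF : filtration F.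
Let G := predictable_rects F.
Let PT := g_sigma_algebraType G.
Let D : set PT := time_domain.

Lemma trace_pred (E : set (R * Omega)) : E `<=` time_domain -> <<s G >> E ->
  <<s time_domain, G >> E.
Proof.
move=> ED sE.
pose S := [set A : set (R * Omega) | <<s time_domain, G >> (time_domain `&` A)].
have GD : forall A, G A -> A `<=` time_domain.
  move=> A [[A0 [_ ->]]|[s [t [A0 [s0 st _ ->]]]]] [u v] /= [].
    by move=> /= -> _; rewrite /time_domain /=.
  by rewrite /time_domain /= in_itv /= => /andP[su _] _; apply: le_trans (ltW su).
have saS : sigma_algebra setT S.
  split.
  - by rewrite /S /= setI0; exact: sigma_algebra0.
  - move=> A SA; rewrite /S /= setTD.
    have -> : time_domain `&` ~` A = time_domain `\` (time_domain `&` A).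
      by apply/seteqP; split => p /=; [move=> [h1 h2]; split => // -[]|move=> [h1 h2]; split => // hA; apply: h2].
    exact: sigma_algebraCD.
  - move=> A SA; rewrite /S /= setI_bigcupr.
    exact: sigma_algebra_bigcup.
have GS : G `<=` S.
  move=> A GA; rewrite /S /=.
  have -> : time_domain `&` A = A by apply/setIidr/GD.
  exact: sub_sigma_algebra.
have := smallest_sub saS GS sE; rewrite /S /=.
by have -> : time_domain `&` E = E by apply/setIidr.
Qed.

Definition hstep (X : R -> Omega -> R) (m : nat) (p : R * Omega) : R := X (grid m p.1) p.2.

Lemma hstep_pre X m B : (forall t, 0 <= t -> meas F t (X t)) -> measurable B ->
  <<s G >> (time_domain `&` (hstep X m) @^-1` B).
Proof.
move=> mX mB.
set N : R := m.+1%:R.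
have N0 : 0 < N by rewrite /N ltr0Sn.
have -> : time_domain `&` (hstep X m) @^-1` B =
  ([set 0] `*` (X 0 @^-1` B)) `|`
  \bigcup_k (`]k%:R / N, k.+1%:R / N] `*` (X (k%:R / N) @^-1` B)).
  apply/seteqP; split => [[t w]|[t w]] /=.
  - rewrite /time_domain /hstep /= => -[]; rewrite le_eqVlt => /orP[/eqP t0|t0].
      by subst t; rewrite /grid ltxx => hB; left.
    have [k [gE [h1 h2]]] := grid_pos m t t0.
    rewrite gE => hB; right; exists k => //=; split => //.
    by rewrite /= in_itv /= h1 h2.
  - move=> [[/= t0 hB]|[k _ [/=]]].
      by subst t; split; rewrite /time_domain /hstep /grid //= ltxx.
    rewrite in_itv /= => /andP[h1 h2] hB.
    have k0 : 0 <= k%:R / N by rewrite divr_ge0.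
    split; first by rewrite /time_domain /=; apply: le_trans (ltW h1).
    by rewrite /hstep /= (grid_uniq _ _ _ h1 h2).
have sG (E : set (R * Omega)) : G E -> <<s G >> E by move=> GE; exact: sub_sigma_algebra.
apply: (@measurableU _ PT).
- apply: sG; left; exists (X 0 @^-1` B); split => //.
  by apply: mX.
- apply: (@bigcup_measurable _ PT) => k _; apply: sG; right.
  exists (k%:R / N), (k.+1%:R / N), (X (k%:R / N) @^-1` B); split => //.
  + by rewrite divr_ge0.
  + by rewrite ltr_pM2r ?invr_gt0 // ltr_nat.
  + by apply: mX => //; rewrite divr_ge0.
Qed.

Lemma ev_inv (e : R) : 0 < e -> \forall n \near \oo, (n.+1%:R : R)^-1 < e.
Proof.
move=> e0.
have [N hN] : exists N : nat, e^-1 < N%:R.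
  by exists (Num.truncn e^-1).+1; rewrite truncnS_gt.
exists N => // n /= Nn.
rewrite -(invrK e) ltf_pV2 ?posrE ?invr_gt0 //; apply: lt_le_trans hN _.
by rewrite ler_nat (leq_trans Nn).
Qed.

Lemma pred_of_cont X : (forall t, 0 <= t -> meas F t (X t)) ->
  (forall w, {within `[0, +oo[, continuous (X^~ w)}) -> predictable F X.
Proof.
move=> mX cX B mB.
have mD : measurable (D : set PT).
  have := hstep_pre X 0 setT mX (@measurableT _ R).
  by rewrite preimage_setT setIT.
have mh m : measurable_fun D (hstep X m).
  by move=> _ B' mB'; exact: hstep_pre.
have mf : measurable_fun D (fun p : PT => X p.1 p.2).
  apply: (measurable_fun_cvg mh) => -[t w] /=; rewrite /D /time_domain /= => t0.
  rewrite /hstep /=; move: t0; rewrite le_eqVlt => /orP[/eqP t0|t0].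
    subst t; rewrite /grid ltxx; exact: cvg_cst.
  apply/cvgrPdist_lt => e e0.
  have [del del0 H] := cont_eps _ _ _ (cX w) (ltW t0) e0.
  near=> n.
  have [k [gE [h1 h2]]] := grid_pos n t t0.
  rewrite gE distrC; apply: H; first by rewrite divr_ge0.
  rewrite ler0_norm ?subr_le0 ?(ltW h1) // opprB.
  have hn : (n.+1%:R : R)^-1 < del by near: n; exact: ev_inv.
  move: h2; rewrite -natr1 mulrDl mul1r => h2.
  move: h2 hn; set q := k%:R / _; set r := (n.+1%:R)^-1 => h2 hn; lra.
have := mf mD B mB.
apply: trace_pred.
by move=> p [].
Unshelve. all: by end_near.
Qed.
End P.

Section Fin.
Context {R : realType}.

Lemma no_poi (f : R -> R) t e : 0 < t -> 0 < e -> (forall s, 0 <= s -> 0 < f s) ->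
  (forall r s, 0 <= r -> r <= s -> `|r - t| < e -> `|s - t| < e -> ln (f s) <= ln (f r)) ->
  ~ point_of_increase f t.
Proof.
move=> t0 e0 fpos H [d d0 Hd].
pose d1 := Num.min d (Num.min (e / 2) (t / 2)).
have d10 : 0 < d1 by rewrite !lt_min d0 !divr_gt0.
have hd1 : d1 <= d by rewrite ge_min lexx.
have he : d1 <= e / 2 by rewrite !ge_min lexx orbT.
have ht : d1 <= t / 2 by rewrite !ge_min lexx !orbT.
have := Hd d1 d1; rewrite d10 hd1 => /(_ isT isT) lt.
have r0 : 0 <= t - d1 by lra.
have n1 : `|t - d1 - t| < e by rewrite addrAC subrr add0r normrN gtr0_norm //; lra.
have n2 : `|t + d1 - t| < e by rewrite addrAC subrr add0r gtr0_norm //; lra.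
have hrs : t - d1 <= t + d1 by lra.
have := H _ _ r0 hrs n1 n2; rewrite leNgt => /negP; apply.
rewrite ltr_ln ?posrE //; apply: fpos; lra.
Qed.

Lemma no_pod (f : R -> R) t e : 0 < t -> 0 < e -> (forall s, 0 <= s -> 0 < f s) ->
  (forall r s, 0 <= r -> r <= s -> `|r - t| < e -> `|s - t| < e -> ln (f r) <= ln (f s)) ->
  ~ point_of_decrease f t.
Proof.
move=> t0 e0 fpos H [d d0 Hd].
pose d1 := Num.min d (Num.min (e / 2) (t / 2)).
have d10 : 0 < d1 by rewrite !lt_min d0 !divr_gt0.
have hd1 : d1 <= d by rewrite ge_min lexx.
have he : d1 <= e / 2 by rewrite !ge_min lexx orbT.
have ht : d1 <= t / 2 by rewrite !ge_min lexx !orbT.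
have := Hd d1 d1; rewrite d10 hd1 => /(_ isT isT) lt.
have r0 : 0 <= t - d1 by lra.
have n1 : `|t - d1 - t| < e by rewrite addrAC subrr add0r normrN gtr0_norm //; lra.
have n2 : `|t + d1 - t| < e by rewrite addrAC subrr add0r gtr0_norm //; lra.
have hrs : t - d1 <= t + d1 by lra.
have := H _ _ r0 hrs n1 n2; rewrite leNgt => /negP; apply.
rewrite ltr_ln ?posrE //; apply: fpos; lra.
Qed.
End Fin.

Theorem mainTheorem3 (R : realType) (d : measure_display) (Omega : measurableType d)
  (F : R -> set (set Omega))
  (w g : R) (x y S L U A B : R -> Omega -> R) :
  filtration F ->
  0 < w < 1 -> 0 < g < 1 ->
  (* reference price: adapted, positive, continuous *)
  adapted F S ->
  (forall t om, 0 <= t -> 0 < S t om) ->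
  (forall om, {within `[0, +oo[, continuous (S^~ om)}) ->
  (* initial reserves known at time 0 *)
  (forall B0 : set R, measurable B0 -> F 0 (x 0 @^-1` B0)) ->
  (forall B0 : set R, measurable B0 -> F 0 (y 0 @^-1` B0)) ->
  (forall t om, 0 <= t -> 0 < x t om /\ 0 < y t om) ->
  (* initial band condition *)
  (forall om, g * poolP w (x 0 om) (y 0 om) <= S 0 om <= poolP w (x 0 om) (y 0 om) / g) ->
  (* no noise traders: reserves change only through continuous arbitrage
     trades; A = cumulative d ln x from sales of X to the pool (dx > 0),
     B = cumulative -d ln x from purchases of X from the pool (dx < 0),
     with g w dx/x + (1-w) dy/y = 0 on sales, w dx/x + g (1-w) dy/y = 0
     on purchases *)
  (forall om, cont_nondecr0 (A^~ om) /\ cont_nondecr0 (B^~ om)) ->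
  (forall t om, 0 <= t ->
     ln (x t om) = ln (x 0 om) + A t om - B t om /\
     ln (y t om) = ln (y 0 om) - g * w / (1 - w) * A t om
                               + w / (g * (1 - w)) * B t om) ->
  (* continuous instantaneous arbitrage: X is sold to the pool only when
     S/P = g and bought from the pool only when S/P = 1/g *)
  (forall om, increases_only_when (A^~ om)
     (fun t => ln (S t om / poolP w (x t om) (y t om))) (ln g)) ->
  (forall om, increases_only_when (B^~ om)
     (fun t => ln (S t om / poolP w (x t om) (y t om))) (- ln g)) ->
  (* the decomposition ln P_t = ln P_0 + U_t - L_t *)
  (forall om, cont_nondecr0 (L^~ om) /\ cont_nondecr0 (U^~ om)) ->
  (forall t om, 0 <= t ->
     ln (poolP w (x t om) (y t om)) =
       ln (poolP w (x 0 om) (y 0 om)) + U t om - L t om) ->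
  (forall t om, 0 <= t ->
     ln g <= ln (S t om / poolP w (x t om) (y t om)) <= - ln g) ->
  (forall om, increases_only_when (L^~ om)
     (fun t => ln (S t om / poolP w (x t om) (y t om))) (ln g)) ->
  (forall om, increases_only_when (U^~ om)
     (fun t => ln (S t om / poolP w (x t om) (y t om))) (- ln g)) ->
  let Z t om := ln (S t om / poolP w (x t om) (y t om)) in
  (* (a) *)
  (predictable F x /\ predictable F y) /\
  (* (b) *)
  (forall om,
     increases_only_when (x^~ om) (Z^~ om) (ln g) /\
     decreases_only_when (x^~ om) (Z^~ om) (- ln g) /\
     increases_only_when (y^~ om) (Z^~ om) (- ln g) /\
     decreases_only_when (y^~ om) (Z^~ om) (ln g)) /\
  (* (c) *)
  (forall om,
     {within `[0, +oo[, continuous (fun t => ln (x t om))} /\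
     {within `[0, +oo[, continuous (fun t => ln (y t om))} /\
     (forall a b, 0 <= a -> a <= b ->
        bounded_variation a b (fun t => ln (x t om)) /\
        bounded_variation a b (fun t => ln (y t om)))) /\
  (* (d), in integrated form (L_0 = U_0 = 0) *)
  (forall t om, 0 <= t ->
     ln (x t om) - ln (x 0 om) =
       (1 - w) / (1 - w + g * w) * L t om
       - g * (1 - w) / (g * (1 - w) + w) * U t om /\
     ln (y t om) - ln (y 0 om) =
       w / (g * (1 - w) + w) * U t om
       - g * w / (1 - w + g * w) * L t om).
Proof.
move=> HF /andP[w0 w1] /andP[g0 g1] adS Spos Scont x0m y0m xypos band ABc lnxy
  incA incB LUc lnP Zband incL incU Z.
have lng : ln g < 0 by rewrite -ln1 ltr_ln ?posrE.
have ab : ln g < - ln g by lra.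
have w1' : 0 < 1 - w by lra.
have Ppos t om : 0 <= t -> 0 < poolP w (x t om) (y t om).
  move=> t0; have [hx hy] := xypos t om t0.
  by rewrite /poolP mulr_gt0 ?divr_gt0.
have lnPE t om : 0 <= t ->
    ln (poolP w (x t om) (y t om)) = ln (w / (1 - w)) + ln (y t om) - ln (x t om).
  move=> t0; have [hx hy] := xypos t om t0.
  have e1 : ln (y t om / x t om) = ln (y t om) - ln (x t om).
    by rewrite lnM ?posrE ?invr_gt0 // lnV ?posrE.
  rewrite /poolP lnM ?posrE ?divr_gt0 // e1; lra.
pose zf om s := ln (S s om) - ln (poolP w (x 0 om) (y 0 om)).
have ZE om t : 0 <= t -> ln (S t om / poolP w (x t om) (y t om)) = zf om t + L t om - U t om.
  move=> t0; rewrite lnM ?posrE ?invr_gt0 ?Spos ?Ppos // lnV ?posrE ?Ppos //.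
  by rewrite lnP // /zf; lra.
have cz om : {within `[0, +oo[, continuous (zf om)}.
  apply: wcontD; last exact: wcontC.
  apply: wcont_comp; last exact: Scont.
  by move=> t t0; apply: continuous_ln; apply: Spos; move: t0; rewrite /= in_itv /= andbT.
have cZ om : {within `[0, +oo[, continuous (fun t => ln (S t om / poolP w (x t om) (y t om)))}.
  apply: (@wcont_eq _ _ (fun t => zf om t + L t om - U t om)).
    by move=> t; rewrite /= in_itv /= andbT => t0; rewrite ZE.
  apply: wcontD; first apply: wcontD => //; first by case: (LUc om) => -[].
  by apply: wcontN; case: (LUc om) => _ [].

pose Zf om t := ln (S t om / poolP w (x t om) (y t om)).
have LUlim om t : 0 <= t ->
    linf (zf om) (ln g) (- ln g) t = L t om /\ uinf (zf om) (ln g) (- ln g) t = U t om.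
  exact: (iter_limit (zf om) (Zf om) (L^~ om) (U^~ om) (ln g) (- ln g) (LUc om).1 (LUc om).2
    (cz om) (ZE om) (fun t t0 => Zband t om t0) ab (incL om) (incU om) (cZ om)).
pose cA := g * w / (1 - w) + 1.
pose cB := w / (g * (1 - w)) + 1.
have dec om t : 0 <= t -> L t om = cA * A t om /\ U t om = cB * B t om.
  apply: (uniq_dec (Zf om) (L^~ om) (U^~ om) (A^~ om) (B^~ om) (ln g) (- ln g) cA cB).
  - by rewrite neq_lt ab.
  - exact: (LUc om).1.
  - exact: (LUc om).2.
  - exact: (ABc om).1.
  - exact: (ABc om).2.
  - exact: incL.
  - exact: incA.
  - exact: incU.
  - exact: incB.
  - move=> t0 t0p.
    have h1 := lnP t0 om t0p; have h2 := lnPE t0 om t0p; have h3 := lnPE 0 om (lexx 0).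
    have [hx hy] := lnxy t0 om t0p.
    have -> : U t0 om - L t0 om = ln (poolP w (x t0 om) (y t0 om)) - ln (poolP w (x 0 om) (y 0 om)).
      by rewrite h1; ring.
    rewrite h2 h3 hx hy /cA /cB; ring.

have nz1 : 1 - w != 0 by rewrite lt0r_neq0.
have nz2 : 1 - w + g * w != 0 by apply: lt0r_neq0; rewrite addr_gt0 // mulr_gt0.
have nz3 : g * (1 - w) + w != 0 by apply: lt0r_neq0; rewrite addr_gt0 // mulr_gt0.
have nzg : g != 0 by rewrite lt0r_neq0.
have hd om t : 0 <= t ->
    ln (x t om) - ln (x 0 om) =
       (1 - w) / (1 - w + g * w) * L t om
       - g * (1 - w) / (g * (1 - w) + w) * U t om /\
     ln (y t om) - ln (y 0 om) =
       w / (g * (1 - w) + w) * U t om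
       - g * w / (1 - w + g * w) * L t om.
  move=> t0; have [hx hy] := lnxy t om t0; have [hL hU] := dec om t t0.
  by rewrite hL hU hx hy /cA /cB; split; field; apply/and4P; split.

have measD' := @measD R d Omega F HF.
have measN' := @measN R d Omega F HF.
have measMl' := @measMl R d Omega F HF.
have meas_ln' := @meas_ln R d Omega F HF.
have meas_exp' := @meas_exp R d Omega F HF.
have meas_cst' := @meas_cst R d Omega F HF.
have meas_mono' := @meas_mono R d Omega F HF.
have meas_ext' := @meas_ext R d Omega F.
have meas_sup' := @meas_sup R d Omega F HF.
have mz s : 0 <= s -> meas F s (fun om => zf om s).
  move=> s0; rewrite /zf.
  apply: (measD'); first by apply: (meas_ln'); exact: adS.
  apply: (measN'); apply: (meas_mono' 0) => //.
  apply: (meas_ext' 0 (fun om => ln (w / (1 - w)) + ln (y 0 om) - ln (x 0 om))).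
    by move=> om; rewrite lnPE.
  apply: (measD').
    apply: (measD'); first exact: (meas_cst').
    by apply: (meas_ln'); exact: y0m.
  by apply: (measN'); apply: (meas_ln'); exact: x0m.
have iprops om k := iter_props (zf om) (Zf om) (L^~ om) (U^~ om) (ln g) (- ln g)
    (LUc om).1 (LUc om).2 (cz om) (ZE om) (fun t t0 => Zband t om t0) k.
have ibnd om t t0 := iter_bnd (zf om) (Zf om) (L^~ om) (U^~ om) (ln g) (- ln g)
    (LUc om).1 (LUc om).2 (cz om) (ZE om) (fun t t0 => Zband t om t0) t t0.
have hub om k t : 0 <= t ->
    Lub (fun c => (zf om c - - ln g) + li (zf om) (ln g) (- ln g) k c) t /\
    Lub (fun c => (ln g - zf om c) + ui (zf om) (ln g) (- ln g) k c) t.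
  by move=> t0; have [_ _ h3 h4] := iprops om k; split; [exact: h3|exact: h4].
have miter := meas_iter F HF zf (ln g) (- ln g) mz hub.
have mL t : 0 <= t -> meas F t (L t).
  move=> t0.
  apply: (meas_ext' t (fun om => linf (zf om) (ln g) (- ln g) t)).
    by move=> om; rewrite (LUlim om t t0).1.
  apply: (meas_sup' t (fun k om => li (zf om) (ln g) (- ln g) k t)).
    by move=> om; exact: (ibnd om t t0).1.
  by move=> k; exact: (miter k t t0).1.
have mU t : 0 <= t -> meas F t (U t).
  move=> t0.
  apply: (meas_ext' t (fun om => uinf (zf om) (ln g) (- ln g) t)).
    by move=> om; rewrite (LUlim om t t0).2.
  apply: (meas_sup' t (fun k om => ui (zf om) (ln g) (- ln g) k t)).
    by move=> om; exact: (ibnd om t t0).2.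
  by move=> k; exact: (miter k t t0).2.
have mx t : 0 <= t -> meas F t (x t).
  move=> t0.
  apply: (meas_ext' t (fun om => expR (ln (x 0 om) + ((1 - w) / (1 - w + g * w) * L t om
       - g * (1 - w) / (g * (1 - w) + w) * U t om)))).
    move=> om; rewrite -(hd om t t0).1 addrC subrK lnK // posrE.
    by case: (xypos t om t0).
  apply: (meas_exp'); apply: (measD').
    by apply: (meas_mono' 0) => //; apply: (meas_ln'); exact: x0m.
  apply: (measD'); first by apply: (measMl'); exact: mL.
  by apply: (measN'); apply: (measMl'); exact: mU.
have my t : 0 <= t -> meas F t (y t).
  move=> t0.
  apply: (meas_ext' t (fun om => expR (ln (y 0 om) + (w / (g * (1 - w) + w) * U t om
       - g * w / (1 - w + g * w) * L t om)))).
    move=> om; rewrite -(hd om t t0).2 addrC subrK lnK // posrE.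
    by case: (xypos t om t0).
  apply: (meas_exp'); apply: (measD').
    by apply: (meas_mono' 0) => //; apply: (meas_ln'); exact: y0m.
  apply: (measD'); first by apply: (measMl'); exact: mU.
  by apply: (measN'); apply: (measMl'); exact: mL.
have clnx om : {within `[0, +oo[, continuous (fun t => ln (x t om))}.
  apply: (@wcont_eq _ _ (fun t => ln (x 0 om) + A t om - B t om)).
    by move=> t; rewrite /= in_itv /= andbT => t0; rewrite (lnxy t om t0).1.
  apply: wcontD; first apply: wcontD; first exact: wcontC.
    by case: (ABc om) => -[].
  by apply: wcontN; case: (ABc om) => _ [].
have clny om : {within `[0, +oo[, continuous (fun t => ln (y t om))}.
  apply: (@wcont_eq _ _ (fun t => ln (y 0 om) - g * w / (1 - w) * A t om
                               + w / (g * (1 - w)) * B t om)).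
    by move=> t; rewrite /= in_itv /= andbT => t0; rewrite (lnxy t om t0).2.
  apply: wcontD; first apply: wcontD; first exact: wcontC.
    by apply: wcontN; apply: wcontM; case: (ABc om) => -[].
  by apply: wcontM; case: (ABc om) => _ [].
have cx om : {within `[0, +oo[, continuous (x^~ om)}.
  apply: (@wcont_eq _ _ (fun t => expR (ln (x t om)))).
    move=> t; rewrite /= in_itv /= andbT => t0; rewrite lnK // posrE.
    by case: (xypos t om t0).
  by apply: wcont_comp => // t _; exact: continuous_expR.
have cy om : {within `[0, +oo[, continuous (y^~ om)}.
  apply: (@wcont_eq _ _ (fun t => expR (ln (y t om)))).
    move=> t; rewrite /= in_itv /= andbT => t0; rewrite lnK // posrE.
    by case: (xypos t om t0).
  by apply: wcont_comp => // t _; exact: continuous_expR.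
split; first by split; apply: pred_of_cont.

have k1 : 0 <= g * w / (1 - w) by rewrite divr_ge0 ?mulr_ge0 // ltW.
have k2 : 0 <= w / (g * (1 - w)) by rewrite divr_ge0 ?mulr_ge0 // ltW.
have Amon om r s : 0 <= r -> r <= s -> A r om <= A s om.
  by case: (ABc om) => -[_ h _] _; exact: h.
have Bmon om r s : 0 <= r -> r <= s -> B r om <= B s om.
  by case: (ABc om) => _ [_ h _]; exact: h.
have xpos om s : 0 <= s -> 0 < x s om by move=> s0; case: (xypos s om s0).
have ypos om s : 0 <= s -> 0 < y s om by move=> s0; case: (xypos s om s0).
split.
  move=> om; split; [|split; [|split]].
  - move=> t t0 poi; apply: contrapT => Zt.
    have [e e0 H] := flat (A^~ om) (Zf om) (ln g) t (ABc om).1 (incA om) t0 Zt.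
    apply: (no_poi (x^~ om) t (Num.min e t)) poi => //; first by rewrite lt_min e0 t0.
      exact: xpos.
    move=> r s r0 rs; rewrite !lt_min => /andP[hr _] /andP[hs _].
    rewrite (lnxy s om (le_trans r0 rs)).1 (lnxy r om r0).1 (H r hr) (H s hs).
    have := Bmon om r s r0 rs; lra.
  - move=> t t0 pod; apply: contrapT => Zt.
    have [e e0 H] := flat (B^~ om) (Zf om) (- ln g) t (ABc om).2 (incB om) t0 Zt.
    apply: (no_pod (x^~ om) t (Num.min e t)) pod => //; first by rewrite lt_min e0 t0.
      exact: xpos.
    move=> r s r0 rs; rewrite !lt_min => /andP[hr _] /andP[hs _].
    rewrite (lnxy s om (le_trans r0 rs)).1 (lnxy r om r0).1 (H r hr) (H s hs).
    have := Amon om r s r0 rs; lra.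
  - move=> t t0 poi; apply: contrapT => Zt.
    have [e e0 H] := flat (B^~ om) (Zf om) (- ln g) t (ABc om).2 (incB om) t0 Zt.
    apply: (no_poi (y^~ om) t (Num.min e t)) poi => //; first by rewrite lt_min e0 t0.
      exact: ypos.
    move=> r s r0 rs; rewrite !lt_min => /andP[hr _] /andP[hs _].
    rewrite (lnxy s om (le_trans r0 rs)).2 (lnxy r om r0).2 (H r hr) (H s hs).
    have := ler_wpM2l k1 (Amon om r s r0 rs); lra.
  - move=> t t0 pod; apply: contrapT => Zt.
    have [e e0 H] := flat (A^~ om) (Zf om) (ln g) t (ABc om).1 (incA om) t0 Zt.
    apply: (no_pod (y^~ om) t (Num.min e t)) pod => //; first by rewrite lt_min e0 t0.
      exact: ypos.
    move=> r s r0 rs; rewrite !lt_min => /andP[hr _] /andP[hs _].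
    rewrite (lnxy s om (le_trans r0 rs)).2 (lnxy r om r0).2 (H r hr) (H s hs).
    have := ler_wpM2l k2 (Bmon om r s r0 rs); lra.
split; last by move=> t om t0; exact: hd.
move=> om; split; first exact: clnx.
split; first exact: clny.
move=> a0 b0 a00; rewrite le_eqVlt => /orP[/eqP <-|ab0].
  by split; exact: bounded_variationxx.
split.
- have -> : (fun t => ln (x t om)) = (fun t => ln (x t om) + B t om) \+ (\- (B^~ om)).
    by apply/funext => t /=; rewrite addrK.
  apply: bounded_variationD => //.
    apply: nondecreasing_bounded_variation => r s.
    rewrite !in_itv /= => /andP[r0 _] /andP[s0 _] rs.
    have r0' := le_trans a00 r0; have s0' := le_trans a00 s0.
    rewrite (lnxy r om r0').1 (lnxy s om s0').1.
    have := Amon om r s r0' rs; lra.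
  apply: bounded_variationN; apply: nondecreasing_bounded_variation => r s.
  rewrite !in_itv /= => /andP[r0 _] /andP[s0 _] rs.
  exact: Bmon om r s (le_trans a00 r0) rs.
- have -> : (fun t => ln (y t om)) =
      (fun t => ln (y t om) + g * w / (1 - w) * A t om) \+ (\- (fun t => g * w / (1 - w) * A t om)).
    by apply/funext => t /=; rewrite addrK.
  apply: bounded_variationD => //.
    apply: nondecreasing_bounded_variation => r s.
    rewrite !in_itv /= => /andP[r0 _] /andP[s0 _] rs.
    have r0' := le_trans a00 r0; have s0' := le_trans a00 s0.
    rewrite (lnxy r om r0').2 (lnxy s om s0').2.
    have := ler_wpM2l k2 (Bmon om r s r0' rs); lra.
  apply: bounded_variationN; apply: nondecreasing_bounded_variation => r s.
  rewrite !in_itv /= => /andP[r0 _] /andP[s0 _] rs.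
  by rewrite /=; have := ler_wpM2l k1 (Amon om r s (le_trans a00 r0) rs); lra.
Qed.
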